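(* Let $q\geq 3$ and $n\ge 2$. The graph with vertex set $\mathcal{HGL}_n(\mathbb{F}_{q^2})$, in which $A,B$ are joined by an edge iff $\operatorname{rank}(A-B)=1$, is connected.
   Context: $\mathbb{F}_{q^2}$ is the field with $q^2$ elements with involution $\bar x=x^q$; $X^\ast=\bar X^\top$; $A$ is hermitian if $A^\ast=A$; $\mathcal{HGL}_n(\mathbb{F}_{q^2})$ is the set of invertible $n\times n$ hermitian matrices over $\mathbb{F}_{q^2}$. *)

(* Defs.v *)
From mathcomp Require Import all_boot all_algebra all_field.
Set Implicit Arguments. Unset Strict Implicit. Unset Printing Implicit Defensive.
Import GRing.Theory.
Local Open Scope ring_scope.

(* F plays the role of F_{q^2}; the involution is x |-> x^q. *)
Definition qbar (F : finFieldType) (q : nat) (x : F) : F := x ^+ q.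

Definition hstar (F : finFieldType) (q n : nat) (A : 'M[F]_n) : 'M[F]_n :=
  (map_mx (qbar q) A)^T.

Definition hermitian (F : finFieldType) (q n : nat) (A : 'M[F]_n) : bool :=
  hstar q A == A.

Definition HGL (F : finFieldType) (q n : nat) (A : 'M[F]_n) : bool :=
  hermitian q A && (A \in unitmx).

Definition hgl_edge (F : finFieldType) (q n : nat) : rel 'M[F]_n :=
  fun A B => [&& HGL q A, HGL q B & \rank (A - B) == 1%N].

(* Main.v *)
Require Import Defs.
From mathcomp Require Import all_boot all_algebra all_field zify.
Set Implicit Arguments. Unset Strict Implicit. Unset Printing Implicit Defensive.
Import GRing.Theory.
Local Open Scope ring_scope.
Section Frob.
Variables (F : finFieldType) (q : nat).
Hypothesis cardF : #|F| = (q ^ 2)%N.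
Hypothesis q3 : (3 <= q)%N.

Lemma pnat_q : [pchar F].-nat q.
Proof.
have [p pr pc] := finPcharP F.
have := card_pprimeChar pc. set k := logn _ _ => ck.
have pq : p.-nat q.
  apply: (@pnat_dvd _ (q ^ 2)); first by rewrite dvdn_exp.
  rewrite -cardF ck pnatX pnat_id //; by rewrite orbT.
apply: sub_in_pnat pq => r _; rewrite inE => /eqP ->; exact: pc.
Qed.

Lemma frobD (x y : F) : (x + y) ^+ q = x ^+ q + y ^+ q.
Proof. exact: exprDn_pchar pnat_q. Qed.

Lemma frobN (x : F) : (- x) ^+ q = - x ^+ q.
Proof. by apply/eqP; rewrite -subr_eq0 opprK -frobD addNr expr0n; case: q q3. Qed.

Lemma frob2 (x : F) : (x ^+ q) ^+ q = x.
Proof. by rewrite -exprM -[(q*q)%N]/(q^2)%N -cardF expf_card. Qed.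

Lemma qpos : (0 < q)%N. Proof. by case: q q3. Qed.

Lemma third_real : exists r : F, r ^+ q = r /\ r != 0 /\ r != 1.
Proof.
have [x [x0 x1]] : exists x : F, x != 0 /\ x ^+ q.+1 != 1.
  case: (pickP (fun x : F => (x != 0) && (x ^+ q.+1 != 1))) => [x /andP[] | H]; first by exists x.
  exfalso.
  pose p : {poly F} := 'X^(q.+1) - 1%:P.
  have pn0 : p != 0 by rewrite -size_poly_eq0 size_XnsubC.
  have := @max_poly_roots _ p (enum (predC1 (0 : F))) pn0.
  rewrite enum_uniq size_XnsubC // -cardE cardC1 cardF.
  have -> : all (root p) (enum (predC1 0)).
    apply/allP => y; rewrite mem_enum inE => y0.
    have := H y; rewrite /= y0 /= => /negbFE /eqP e.
    by rewrite /root /p !hornerE e subrr.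
  move=> /(_ isT isT); rewrite expnS expn1 => h.
  have := q3; clear -h => h3; have : (3 * q <= q * q)%N by rewrite leq_mul2r h3 orbT.
  lia.
exists (x ^+ q.+1); split; last split.
- by rewrite -exprM mulSn exprD -[(q*q)%N]/(q^2)%N -cardF expf_card exprS mulrC.
- by rewrite expf_neq0.
- exact: x1.
Qed.

Lemma det1Dmul (R : comUnitRingType) n (w : 'cV[R]_n) (v : 'rV[R]_n) :
  \det (1%:M + w *m v) = 1 + (v *m w) 0 0.
Proof.
pose L := block_mx 1%:M 0 v (1%:M : 'M[R]_1).
pose Md := block_mx (1%:M + w *m v) w 0 (1%:M : 'M[R]_1).
pose Rr := block_mx 1%:M 0 (-v) (1%:M : 'M[R]_1).
have E : L *m Md *m Rr = block_mx 1%:M w 0 (1%:M + v *m w).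
  rewrite /L /Md /Rr !mulmx_block !mul1mx !mulmx1 !mul0mx !mulmx0 !add0r !addr0.
  congr block_mx.
  - by rewrite mulmxN addrK.
  - rewrite mulmxDr mulmxDl !mulmxN !mulmx1 !mul1mx mulmxA addrA addrK subrr.
  - reflexivity.
  - exact: addrC.
have := congr1 determinant E.
rewrite !det_mulmx /L /Md /Rr det_lblock det_ublock det_lblock det_ublock !det1 !mul1r !mulr1.
by move=> ->; rewrite det_mx11 !mxE.
Qed.
Definition cstar n (w : 'cV[F]_n) : 'rV[F]_n := (map_mx (qbar q) w)^T.
Definition isdir n (M : 'M[F]_n) := exists a (w : 'cV[F]_n), a ^+ q = a /\ M = a *: (w *m cstar w).

Lemma dirE n (w : 'cV[F]_n) i j : (w *m cstar w) i j = w i 0 * w j 0 ^+ q.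
Proof. by rewrite !mxE big_ord1 !mxE. Qed.

Lemma hermP n (A : 'M[F]_n) : reflect (forall i j, A j i ^+ q = A i j) (Defs.hermitian q A).
Proof.
rewrite /Defs.hermitian; apply: (iffP eqP) => [hA i j | H]; first by rewrite -{2}hA /hstar /qbar !mxE.
by apply/matrixP => i j; rewrite /hstar /qbar !mxE.
Qed.

Lemma herm_dir n (X M : 'M[F]_n) t : Defs.hermitian q X -> isdir M -> t ^+ q = t ->
  Defs.hermitian q (X + t *: M).
Proof.
move=> /hermP hX [a [w [ha ->]]] ht; apply/hermP => i j.
rewrite !mxE !big_ord1 /cstar !mxE /qbar frobD hX !exprMn ht ha frob2; congr (_ + _).
by rewrite [w i 0 * _]mulrC.
Qed.

Lemma herm_sub n (A B : 'M[F]_n) : Defs.hermitian q A -> Defs.hermitian q B -> Defs.hermitian q (B - A).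
Proof. by move=> /hermP hA /hermP hB; apply/hermP => i j; rewrite !mxE frobD frobN hA hB. Qed.

Lemma rank_dir n (M : 'M[F]_n) t : isdir M -> M != 0 -> t != 0 -> \rank (t *: M) = 1%N.
Proof.
move=> [a [w [_ eM]]] M0 t0; rewrite mxrank_scale_nz //.
apply/eqP; rewrite eqn_leq lt0n mxrank_eq0 M0 andbT eM.
apply: leq_trans (mxrank_scale _ _) _; apply: leq_trans (mxrankM_maxl _ _) _.
exact: rank_leq_col.
Qed.

Lemma det_rank1 n (X : 'M[F]_n) (u : 'cV_n) (v : 'rV_n) : X \in unitmx ->
  \det (X + u *m v) = \det X * (1 + (v *m invmx X *m u) 0 0).
Proof.
move=> uX; have -> : X + u *m v = X *m (1%:M + invmx X *m u *m v).
  by rewrite mulmxDr mulmx1 !mulmxA mulmxV // mul1mx.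
by rewrite det_mulmx det1Dmul mulmxA.
Qed.

Lemma det_line n (Z M : 'M[F]_n) : Z \in unitmx -> isdir M ->
  exists c, forall t, \det (Z + t *: M) = \det Z * (1 + t * c).
Proof.
move=> uZ [a [w [_ ->]]]; exists ((cstar w *m invmx Z *m (a *: w)) 0 0) => t.
by rewrite !scalemxAl det_rank1 // -scalemxAr mxE.
Qed.

Definition dsum n (H : 'M[F]_n) := exists Ms : seq 'M[F]_n,
  (forall M, M \in Ms -> isdir M) /\ H = \sum_(M <- Ms) M.

Lemma dsum0 n : dsum (0 : 'M[F]_n).
Proof. by exists [::]; split => //; rewrite big_nil. Qed.

Lemma dsumD n (H1 H2 : 'M[F]_n) : dsum H1 -> dsum H2 -> dsum (H1 + H2).
Proof.
move=> [M1 [d1 ->]] [M2 [d2 ->]]; exists (M1 ++ M2); split; last by rewrite big_cat.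
by move=> M; rewrite mem_cat => /orP[/d1|/d2].
Qed.

Lemma dsum_dir n (M : 'M[F]_n) : isdir M -> dsum M.
Proof. by move=> d; exists [:: M]; split; [move=> M'; rewrite inE => /eqP -> | rewrite big_seq1]. Qed.

Lemma qb (b : bool) : (b%:R : F) ^+ q = b%:R.
Proof. by case: b; rewrite ?expr1n // expr0n eqn0Ngt qpos. Qed.

Lemma cstar_delta n (i : 'I_n) : cstar (delta_mx i 0) = delta_mx 0 i.
Proof. by apply/matrixP => r s; rewrite !mxE /qbar qb andbC. Qed.

Lemma cstarD n (u v : 'cV[F]_n) : cstar (u + v) = cstar u + cstar v.
Proof. by apply/matrixP => r s; rewrite !mxE /qbar frobD. Qed.

Lemma cstarZ n a (u : 'cV[F]_n) : cstar (a *: u) = a ^+ q *: cstar u.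
Proof. by apply/matrixP => r s; rewrite !mxE /qbar exprMn. Qed.

Lemma dsum_diag n (H : 'M[F]_n) i : H i i ^+ q = H i i -> dsum (H i i *: delta_mx i i).
Proof.
move=> hi; apply: dsum_dir; exists (H i i), (delta_mx i 0); split => //.
by rewrite cstar_delta mul_delta_mx.
Qed.

Lemma zmod_aux (V : zmodType) (a b c d : V) : b + c = a + b + c + d + - a + - d.
Proof. by rewrite -(addrA _ (-a)) (addrC (-a)) addrA addrK addrC -addrA addKr. Qed.

Lemma dsum_off n (H : 'M[F]_n) i j : i != j -> H j i = H i j ^+ q ->
  dsum (H i j *: delta_mx i j + H j i *: delta_mx j i).
Proof.
move=> ij hji; set h := H i j; set c := h ^+ q.
pose w := delta_mx i 0 + c *: delta_mx j 0 : 'cV[F]_n.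
have ew : w *m cstar w = delta_mx i i + h *: delta_mx i j + c *: delta_mx j i
                         + (c * h) *: delta_mx j j.
  rewrite /w cstarD cstarZ !cstar_delta /c frob2 mulmxDl !mulmxDr.
  by rewrite -!scalemxAl -!scalemxAr !mul_delta_mx scalerA !addrA.
have -> : h *: delta_mx i j + H j i *: delta_mx j i =
   1 *: (w *m cstar w) + (-1) *: (delta_mx i 0 *m cstar (delta_mx i 0))
   + (- (c * h)) *: (delta_mx j 0 *m cstar (delta_mx j 0)).
  rewrite ew !cstar_delta !mul_delta_mx scale1r scaleN1r scaleNr hji -/c.
  exact: zmod_aux.
apply: dsumD; first apply: dsumD.
- by apply: dsum_dir; exists 1, w; rewrite expr1n.
- by apply: dsum_dir; exists (-1), (delta_mx i 0); rewrite frobN expr1n.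
- apply: dsum_dir; exists (- (c * h)), (delta_mx j 0); split => //.
  by rewrite frobN exprMn /c frob2 mulrC.
Qed.

Lemma dsum_herm n (H : 'M[F]_n) : Defs.hermitian q H -> dsum H.
Proof.
move=> /hermP hH.
pose Fm (i j : 'I_n) := H i j *: delta_mx i j.
have eH : H = \sum_(i < n) \sum_(j < n)
   ((if (i < j)%N then Fm i j + Fm j i else 0) + (if (i == j :> nat) then Fm i j else 0)).
  rewrite {1}[H]matrix_sum_delta.
  transitivity (\sum_(i < n) \sum_(j < n) ((if (i < j)%N then Fm i j else 0)
     + (if (j < i)%N then Fm i j else 0) + (if (i == j :> nat) then Fm i j else 0))).
    apply: eq_bigr => i _; apply: eq_bigr => j _.
    by case: ltngtP => _; rewrite ?addr0 ?add0r.
  transitivity (\sum_(i < n) \sum_(j < n) ((if (i < j)%N then Fm i j else 0)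
     + (if (i < j)%N then Fm j i else 0) + (if (i == j :> nat) then Fm i j else 0))); last first.
    apply: eq_bigr => i _; apply: eq_bigr => j _.
    by case: ifP; rewrite ?addr0.
  under eq_bigr => i _ do rewrite !big_split.
  under [in RHS]eq_bigr => i _ do rewrite !big_split.
  rewrite !big_split /=; congr (_ + _ + _).
  by rewrite [in RHS]exchange_big.
rewrite eH; apply: big_ind => [|x y|i _]; first exact: dsum0; first exact: dsumD.
apply: big_ind => [|x y|j _]; first exact: dsum0; first exact: dsumD.
apply: dsumD.
  case: ifP => ij; last exact: dsum0.
  apply: dsum_off; last by rewrite -(hH i j) frob2.
  by apply/eqP => e; move: ij; rewrite e ltnn.
case: eqP => [/ord_inj <-|_]; last exact: dsum0.
exact: dsum_diag.
Qed.

Lemma path_dirs n (Ms : seq 'M[F]_n) : (forall M, M \in Ms -> isdir M) ->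
  forall X, HGL q X -> HGL q (X + \sum_(M <- Ms) M) ->
  connect (@hgl_edge F q n) X (X + \sum_(M <- Ms) M).
Proof.
elim: Ms => [|M Ms IH] dM X hX hY; first by rewrite big_nil addr0 connect0.
have dM0 : isdir M by apply: dM; rewrite inE eqxx.
have dMs : forall M', M' \in Ms -> isdir M' by move=> M' h; apply: dM; rewrite inE h orbT.
rewrite big_cons in hY *.
set S := \sum_(M <- Ms) M in hY *.
have [M0 | M0] := eqVneq M 0.
  by rewrite M0 add0r in hY *; apply: IH.
set Y := X + (M + S) in hY *.
move: (hX) (hY) => /andP[hXh uX] /andP[hYh uY].
have [c hc] := det_line uX dM0.
have [c' hc'] := det_line uY dM0.
have detX : \det X != 0 by rewrite -unitfE -unitmxE.
have detY : \det Y != 0 by rewrite -unitfE -unitmxE.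
have [t [tr [gX gY]]] : exists t : F, t ^+ q = t /\ \det (X + t *: M) != 0
                                     /\ \det (Y + (t - 1) *: M) != 0.
  have ok t : t ^+ q = t -> 1 + t * c != 0 -> 1 + (t - 1) * c' != 0 ->
     exists t : F, t ^+ q = t /\ \det (X + t *: M) != 0 /\ \det (Y + (t - 1) *: M) != 0.
    by move=> t1 t2 t3; exists t; rewrite hc hc' !mulf_neq0.
  have [h0|h0] := eqVneq (1 + (0 - 1) * c') 0; last first.
    by apply: (ok 0) => //; rewrite ?expr0n ?eqn0Ngt ?qpos // mul0r addr0 oner_neq0.
  have [h1|h1] := eqVneq (1 + 1 * c) 0; last first.
    by apply: (ok 1) => //; rewrite ?expr1n // subrr mul0r addr0 oner_neq0.
  have [r [rr [r0 r1]]] := third_real.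
  apply: (ok r) => //.
    have ec : c = -1 by apply: (addrI 1); rewrite subrr -h1 mul1r.
    by rewrite ec mulrN1 subr_eq0 eq_sym.
  have ec' : c' = 1 by apply/esym/subr0_eq; rewrite -h0 sub0r mulN1r.
  rewrite ec'.
  by rewrite mulr1 addrC subrK.
set X' := X + t *: M.
set Y' := Y + (t - 1) *: M.
have eY' : Y' = X' + S.
  by rewrite /Y' /X' /Y scalerBl scale1r addrC -addrA [- M + _]addrCA addKr addrCA addrA.
have hX' : HGL q X' by rewrite /HGL herm_dir // unitmxE unitfE.
have hY' : HGL q Y'.
  by rewrite /HGL herm_dir // ?unitmxE ?unitfE // frobD frobN expr1n tr.
have c1 : connect (@hgl_edge F q n) X X'.
  have [t0 | t0] := eqVneq t 0; first by rewrite /X' t0 scale0r addr0 connect0.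
  apply: connect1; rewrite /hgl_edge hX hX' /= /X' opprD addrA subrr add0r.
  by rewrite -scaleNr rank_dir // oppr_eq0.
have c2 : connect (@hgl_edge F q n) X' Y'.
  by rewrite eY'; apply: IH => //; rewrite -eY'.
have c3 : connect (@hgl_edge F q n) Y' Y.
  have [t1 | t1] := eqVneq t 1; first by rewrite /Y' t1 subrr scale0r addr0 connect0.
  apply: connect1; rewrite /hgl_edge hY' hY /= /Y' addrAC subrr add0r.
  by rewrite rank_dir // subr_eq0.
exact: connect_trans (connect_trans c1 c2) c3.
Qed.
End Frob.

Theorem lemma2p5 (F : finFieldType) (q n : nat) :
  #|F| = (q ^ 2)%N -> (3 <= q)%N -> (2 <= n)%N ->
  forall A B : 'M[F]_n, HGL q A -> HGL q B -> connect (@hgl_edge F q n) A B.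
Proof.
move=> cardF q3 _ A B hA hB.
have hH : Defs.hermitian q (B - A).
  by apply: (herm_sub cardF q3); [case/andP: hA | case/andP: hB].
have [Ms [dMs eMs]] := dsum_herm cardF q3 hH.
have eB : B = A + \sum_(M <- Ms) M by rewrite -eMs addrC subrK.
rewrite eB; apply: (path_dirs cardF q3) => //; by rewrite -eB.
Qed.
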